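(* For every block $i\in\{1,\dots,N\}$, the function $\hat u_i^*(\epsilon)=\sum_{\gamma_G,\gamma_H\in\{H_1,\dots,H_K\}}u_i^*(\langle\epsilon,\gamma_G,\gamma_H\rangle)$ is non-increasing in the battery energy state $\epsilon$.
   Context: Finite-horizon MDP with $N$ blocks of length $\tau>0$. Parameters: $B_m>0$, positive integers $M,K$; channel levels $0<H_1<\dots<H_K$; $R,W,\sigma^2,g_0,\theta,d_G,d_H>0$; $p_G^{\max},p_H^{\max}>0$; weights $w_G,w_D>0$; $E_{H}$ a random variable with density $f_{E_H}$ on $[0,E_m]$. A state is $s=\langle\epsilon,\gamma_G,\gamma_H\rangle$ with $\epsilon\in\{(2m-1)B_m/(2M): m=1,\dots,M\}$ and $\gamma_G,\gamma_H\in\{H_1,\dots,H_K\}$. Let $p^{inv}_j(s)=(2^{R/(W\tau)}-1)\sigma^2(g_0 d_j^{-\theta}\gamma_j)^{-1}$ for $j\in\{G,H\}$, $\kappa=\min\{p_G^{\max},w_D(w_G\tau)^{-1}\}$, and $c(s)=w_D$ if $p^{inv}_G(s)>\kappa$, $c(s)=w_G p^{inv}_G(s)\tau$ otherwise. The allowable actions are $\mathcal{A}_s=\{0\}$ if $p^{inv}_H(s)>\min\{\epsilon/\tau,p_H^{\max}\}$ and $\mathcal{A}_s=\{0,1\}$ otherwise; the cost is $c(s,\alpha)=(1-\alpha)c(s)$. Transitions: given $s$ and $\alpha$, the next channel states $\gamma_G',\gamma_H'$ are independent, each uniform on $\{H_1,\dots,H_K\}$, independent of the next energy state $\epsilon'=Q(\epsilon-\alpha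 p^{inv}_H(s)\tau+E_H)$, where $Q(\varepsilon)=\big(2\min\{\lfloor M\min\{\varepsilon,B_m\}/B_m\rfloor+1,M\}-1\big)B_m/(2M)$; denote the resulting transition probability $p(s'|s,\alpha)$. Optimal cost-to-go functions: $u_N^*(s)=\min_{\alpha\in\mathcal{A}_s}c(s,\alpha)$ and, for $i<N$, $u_i^*(s)=\min_{\alpha\in\mathcal{A}_s}\{c(s,\alpha)+\sum_{s'}p(s'|s,\alpha)u_{i+1}^*(s')\}$. *)

(* Defs.v *)
From HB Require Import structures.
From mathcomp Require Import all_boot all_order all_algebra.
From mathcomp Require Import all_classical all_reals all_analysis.
Set Implicit Arguments. Unset Strict Implicit. Unset Printing Implicit Defensive.
Import Order.TTheory GRing.Theory Num.Theory.
Local Open Scope ring_scope.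
Local Open Scope classical_set_scope.

(* Model data of the finite-horizon MDP.  Channel levels H_1 < ... < H_K are
   indexed by 'I_K (H k = H_{k+1}); energy levels
   (2m-1) B_m/(2M), m = 1..M, are indexed by j : 'I_M (m = j+1). *)
Record mdp (R : realType) (M K : nat) := Mdp {
  tau : R;  Bm : R;  Hl : 'I_K -> R;
  Rr : R;  W : R;  sigma2 : R;  g0 : R;  theta : R;  dG : R;  dH : R;
  pGmax : R;  pHmax : R;  wG : R;  wD : R;
  Em : R;  fEH : R -> R  (* density of E_H on [0, Em] *)
}.

Section Model.
Variables (R : realType) (M K : nat) (P : mdp R M K).

Definition eps (j : 'I_M) : R := (2 * j.+1 - 1)%N%:R * Bm P / (2 * M%:R).

Definition Q (e : R) : R :=
  let z : int := Num.min (Num.floor (M%:R * Num.min e (Bm P) / Bm P) + 1) (M%:Z) in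
  (2 * z - 1)%:~R * Bm P / (2 * M%:R).

Definition state := ('I_M * 'I_K * 'I_K)%type.
Definition st_eps (s : state) : R := eps s.1.1.
Definition st_gG (s : state) : R := Hl P s.1.2.
Definition st_gH (s : state) : R := Hl P s.2.

Definition pinv (d gamma : R) : R :=
  (2 `^ (Rr P / (W P * tau P)) - 1) * sigma2 P
    / (g0 P * d `^ (- theta P) * gamma).
Definition pinvG (s : state) : R := pinv (dG P) (st_gG s).
Definition pinvH (s : state) : R := pinv (dH P) (st_gH s).

Definition kappa : R := Num.min (pGmax P) (wD P / (wG P * tau P)).

Definition cst (s : state) : R :=
  if pinvG s > kappa then wD P else wG P * pinvG s * tau P.

Definition allow1 (s : state) : bool :=
  pinvH s <= Num.min (st_eps s / tau P) (pHmax P).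

Definition cost (s : state) (a : bool) : R := (1 - (a : nat)%:R) * cst s.

Definition suppE : set R := `[0, Em P].
Definition evQ (x e : R) : set R := suppE `&` [set t | Q (x + t) = e].
Definition prob_Q (x e : R) : R :=
  fine (\int[@lebesgue_measure R]_(t in evQ x e) (fEH P t)%:E)%E.

Definition ptrans (s : state) (a : bool) (s' : state) : R :=
  (1 / K%:R) * (1 / K%:R) *
  prob_Q (st_eps s - (a : nat)%:R * pinvH s * tau P) (st_eps s').

Definition qval (V : state -> R) (s : state) (a : bool) : R :=
  cost s a + \sum_(s' : state) ptrans s a s' * V s'.

Definition minA (F : bool -> R) (s : state) : R :=
  if allow1 s then Num.min (F false) (F true) else F false.

(* backward recursion: V k = u^*_{N-k} *)
Fixpoint Vk (k : nat) (s : state) : R :=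
  match k with
  | 0 => minA (cost s) s
  | k'.+1 => minA (qval (Vk k') s) s
  end.

Definition ustar (N i : nat) (s : state) : R := Vk (N - i) s.

Definition uhat (N i : nat) (j : 'I_M) : R :=
  \sum_(gG : 'I_K) \sum_(gH : 'I_K) ustar N i (j, gG, gH).

End Model.

(* Main.v *)
Require Import Defs.
From HB Require Import structures.
From mathcomp Require Import all_boot all_order all_algebra.
From mathcomp Require Import all_classical all_reals all_analysis.
From mathcomp Require Import zify ring lra.
From mathcomp Require Import measurable_realfun.
Import Order.TTheory GRing.Theory Num.Theory.
Local Open Scope ring_scope.
Local Open Scope classical_set_scope.

Section S.
Variables (R : realType) (M K : nat) (P : mdp R M K).
Hypothesis hM : (0 < M)%N.
Hypothesis hB : 0 < Bm P.

Definition thr (n : nat) : R := n%:R * Bm P / M%:R.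

Lemma Mpos : 0 < (M%:R : R).
Proof. by rewrite ltr0n. Qed.

Lemma thr_le r (a : nat) : (a%:R <= M%:R * r / Bm P) = (thr a <= r).
Proof.
rewrite /thr ler_pdivlMr // ler_pdivrMr ?Mpos //.
by rewrite [r * _]mulrC.
Qed.

Lemma thr_lt r (a : nat) : (M%:R * r / Bm P < a%:R) = (r < thr a).
Proof.
rewrite /thr ltr_pdivrMr // ltr_pdivlMr ?Mpos //.
by rewrite [r * _]mulrC.
Qed.

Lemma thr_leB (a : nat) : (a <= M)%N -> thr a <= Bm P.
Proof.
move=> h; by rewrite /thr ler_pdivrMr ?Mpos // mulrC ler_pM2l // ler_nat.
Qed.

Lemma thr_mono (a b : nat) : (a <= b)%N -> thr a <= thr b.
Proof.
move=> h; by rewrite /thr ler_pM2r ?invr_gt0 ?Mpos // ler_pM2r // ler_nat.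
Qed.

Lemma Qchar (y : R) (j : 'I_M) : 0 <= y ->
  (Q P y = eps P j) <-> (thr j <= y /\ ((j.+1 < M)%N -> y < thr j.+1)).
Proof.
move=> y0.
have hj := ltn_ord j.
set m := Num.min y (Bm P).
set r := M%:R * m / Bm P.
set k := Num.floor r.
have m0 : 0 <= m by rewrite le_min y0 ltW.
have r0 : 0 <= r by rewrite /r; apply: divr_ge0; [apply: mulr_ge0; [exact: ler0n | exact: m0] | exact: ltW hB].
have k0 : (0 <= k)%R by rewrite /k floor_ge0.
have E1 : Q P y = eps P j <-> Num.min (k + 1) (M%:Z) = (j.+1)%:Z.
  rewrite /Q /eps -/m -/r -/k.
  set z := Num.min (k + 1) (M%:Z).
  have c0 : Bm P / (2 * M%:R) != 0.
    by rewrite mulf_neq0 ?invr_eq0 ?mulf_neq0 ?gt_eqF ?Mpos // pnatr_eq0.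
  rewrite -!mulrA.
  split.
    move/(mulIf c0) => /eqP.
    have -> : ((2 * j.+1 - 1)%N%:R : R) = ((2 * j.+1 - 1)%N%:Z)%:~R by [].
    rewrite eqr_int => /eqP; lia.
  move=> ->.
  congr (_ * _).
rewrite E1.
have thrB : thr j <= Bm P by apply: thr_leB; apply: ltnW.
have LE : (j%:Z <= k) <-> thr j <= y.
  rewrite /k floor_ge_int.
  have -> : ((j%:Z)%:~R : R) = j%:R by [].
  rewrite thr_le /m le_min thrB andbT; by [].
case: (ltnP j.+1 M) => hjM.
  have thrB1 : thr j.+1 <= Bm P by apply: thr_leB; apply: ltnW.
  have LT : (k < j.+1%:Z) <-> y < thr j.+1.
    rewrite /k floor_lt_int.
    have -> : ((j.+1%:Z)%:~R : R) = j.+1%:R by [].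
    rewrite thr_lt /m gt_min.
    have -> : (Bm P < thr j.+1) = false by apply/negbTE; rewrite -leNgt.
    by rewrite orbF.
  split.
    move=> h.
    have hk : k = j%:Z by move: h; rewrite /Order.min; case: ifP => HH; lia.
    split; first by apply/LE; rewrite hk.
    by move=> _; apply/LT; rewrite hk; lia.
  move=> [h1 h2].
  have := (proj2 LE h1); have := (proj2 LT (h2 isT)) => a b.
  have hk : k = j%:Z by lia.
  rewrite hk /Order.min; case: ifP => HH; lia.
have hjM' : j.+1 = M by apply/eqP; rewrite eqn_leq hj hjM.
split.
  move=> h; split; last by [].
  apply/LE; move: h; rewrite /Order.min; case: ifP => HH; lia.
move=> [h1 _].
have := proj2 LE h1 => a.
rewrite /Order.min; case: ifP => HH; lia.
Qed.


Hypothesis mf : measurable_fun (suppE P) (fEH P).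
Hypothesis f0 : forall t, 0 <= fEH P t.
Hypothesis f1 : (\int[@lebesgue_measure R]_(t in suppE P) (fEH P t)%:E)%E = 1%E.

Definition Tset (x : R) (n : nat) : set R :=
  suppE P `&` [set t | thr n <= x + t /\ (n < M)%N].

Definition G (x : R) (n : nat) : R :=
  fine (\int[@lebesgue_measure R]_(t in Tset x n) (fEH P t)%:E)%E.

Lemma msupp : measurable (suppE P).
Proof. exact: measurable_itv. Qed.

Lemma sup0 t : suppE P t -> 0 <= t.
Proof. by rewrite /suppE /= in_itv /= => /andP[]. Qed.

Lemma Tset_meas x n : measurable (Tset x n).
Proof.
rewrite /Tset.
have [h|h] : (n < M)%N \/ ~~ (n < M)%N by case: (n < M)%N; [left|right].
  have -> : [set t | thr n <= x + t /\ (n < M)%N] = `[thr n - x, +oo[%classic.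
    apply/seteqP; split => t /=; rewrite in_itv /= andbT.
      by move=> [? _]; rewrite lerBlDl.
    by move=> ?; split => //; rewrite -lerBlDl.
  by apply: measurableI; [exact: msupp | exact: measurable_itv].
have -> : [set t | thr n <= x + t /\ (n < M)%N] = set0.
  by apply/seteqP; split => t //= [_]; move/negP: h.
by rewrite setI0.
Qed.

Lemma mfE : measurable_fun (suppE P) (EFin \o fEH P).
Proof. exact: (proj2 (measurable_EFinP _ _) mf). Qed.

Lemma intA_fin A : measurable A -> A `<=` suppE P ->
  (\int[@lebesgue_measure R]_(t in A) (fEH P t)%:E)%E \is a fin_num.
Proof.
move=> mA sA.
rewrite ge0_fin_numE; last by apply: integral_ge0 => t _; rewrite lee_fin.
apply: (@le_lt_trans _ _ 1%E); last by rewrite ltry.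
rewrite -f1; apply: ge0_subset_integral => //; first exact: msupp.
  exact: mfE.
by move=> t _; rewrite lee_fin.
Qed.

Lemma Tset_sub x n : Tset x n `<=` suppE P.
Proof. by move=> t []. Qed.

Lemma Tset_S x n : Tset x n.+1 `<=` Tset x n.
Proof.
move=> t [st [h1 h2]]; split => //; split; last exact: ltnW.
by apply: le_trans h1; apply: thr_mono.
Qed.

Lemma prob_G x (j : 'I_M) : 0 <= x -> prob_Q P x (eps P j) = G x j - G x j.+1.
Proof.
move=> x0.
have ev : evQ P x (eps P j) = Tset x j `\` Tset x j.+1.
  apply/seteqP; split => t /=.
    move=> [st hq].
    have [a b] := (Qchar (x + t) j (addr_ge0 x0 (sup0 _ st))).1 hq.
    split; first by split => //; split.
    move=> [_ [c d]]; have := b d; by rewrite ltNge c.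
  move=> [[st [a _]] nb]; split => //; apply/(Qchar (x + t) j (addr_ge0 x0 (sup0 _ st))).2.
  split => // hj1; rewrite ltNge; apply/negP => c; apply: nb; by split.
rewrite /prob_Q ev /G.
have U : Tset x j = (Tset x j `\` Tset x j.+1) `|` Tset x j.+1.
  by rewrite setDKU //; exact: Tset_S.
have mD : measurable (Tset x j `\` Tset x j.+1).
  by apply: measurableD; exact: Tset_meas.
rewrite [in X in _ = fine X - _]U ge0_integral_setU //.
all: try exact: Tset_meas.
all: try (by move=> t _; rewrite lee_fin).
all: try (by apply/disj_setPS => t [[_ ?] ?]).
all: try (rewrite -U; apply: measurable_funS mfE => //; [exact: msupp | exact: Tset_sub]).
have sD : Tset x j `\` Tset x j.+1 `<=` suppE P by move=> t [[]].
by rewrite (fineD (@intA_fin _ mD sD) (@intA_fin _ (Tset_meas x j.+1) (@Tset_sub x j.+1))) addrK.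
Qed.

Lemma G_mono x1 x2 n : x1 <= x2 -> G x1 n <= G x2 n.
Proof.
move=> hx.
have sub : Tset x1 n `<=` Tset x2 n.
  move=> t [st [a b]]; split => //; split => //.
  by apply: le_trans a _; rewrite lerD2r.
apply: fine_le; try (apply: intA_fin; [exact: Tset_meas | exact: Tset_sub]).
apply: ge0_subset_integral => //; try exact: Tset_meas.
  apply: measurable_funS mfE => //; first exact: msupp.
  exact: Tset_sub.
by move=> t _; rewrite lee_fin.
Qed.

Lemma G0 x1 x2 : 0 <= x1 -> 0 <= x2 -> G x1 0 = G x2 0.
Proof.
move=> h1 h2.
have E x : 0 <= x -> Tset x 0 = suppE P.
  move=> h; apply/seteqP; split => t; first by case.
  move=> st; split => //; split => //.
  by rewrite /thr mul0r mul0r; apply: addr_ge0 => //; exact: sup0.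
by rewrite /G !E.
Qed.

Lemma GM x : G x M = 0.
Proof.
rewrite /G (_ : Tset x M = set0); first by rewrite integral_set0.
by apply/seteqP; split => t //= [_ [_]]; rewrite ltnn.
Qed.


Lemma abel (D h : nat -> R) n : D 0%N = 0 -> D n = 0 -> (forall j, 0 <= D j) ->
  (forall j, (j.+1 < n)%N -> h j.+1 <= h j) ->
  \sum_(j < n) (D j - D j.+1) * h j <= 0.
Proof.
move=> D0 Dn Dge hm.
have id : forall m, \sum_(j < m) (D j - D j.+1) * h j =
  D 0%N * h 0%N - D m * h m + \sum_(j < m) D j.+1 * (h j.+1 - h j).
  elim=> [|m IH]; first by rewrite !big_ord0; ring.
  by rewrite !big_ord_recr /= IH; ring.
rewrite id D0 Dn !mul0r subr0 add0r.
apply: sumr_le0 => j _.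
have hj := ltn_ord j.
case: (ltnP j.+1 n) => hjn.
  by apply: mulr_ge0_le0 => //; rewrite subr_le0; apply: hm.
have -> : j.+1 = n by apply/eqP; rewrite eqn_leq hj hjn.
by rewrite Dn mul0r.
Qed.

Lemma auxle (a b c d : R) : a = c -> b = d -> c - d <= 0 -> a <= b.
Proof. by move=> -> ->; rewrite subr_le0. Qed.

Lemma KL x1 x2 (h : 'I_M -> R) : 0 <= x1 -> x1 <= x2 ->
  (forall j j' : 'I_M, (j <= j')%N -> h j' <= h j) ->
  \sum_(j : 'I_M) prob_Q P x2 (eps P j) * h j <=
  \sum_(j : 'I_M) prob_Q P x1 (eps P j) * h j.
Proof.
move=> h1 h2 hm.
pose o0 := Ordinal hM.
pose hn := fun n => h (insubd o0 n).
have E x : 0 <= x -> \sum_(j : 'I_M) prob_Q P x (eps P j) * h j =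
    \sum_(j < M) (G x j - G x j.+1) * hn j.
  move=> hx; apply: eq_bigr => j _; by rewrite prob_G // /hn valKd.
have e2 := E x2 (le_trans h1 h2).
have e1 := E x1 h1.
suff key : \sum_(j < M) (G x2 j - G x2 j.+1) * hn j -
   \sum_(j < M) (G x1 j - G x1 j.+1) * hn j <= 0 by apply: (auxle _ _ _ _ e2 e1).
pose D := fun n => G x2 n - G x1 n.
have -> : \sum_(j < M) (G x2 j - G x2 j.+1) * hn j -
   \sum_(j < M) (G x1 j - G x1 j.+1) * hn j = \sum_(j < M) (D j - D j.+1) * hn j.
  rewrite -sumrB; apply: eq_bigr => j _; rewrite /D.
  set a := G x2 j; set b := G x2 j.+1; set c := G x1 j; set d := G x1 j.+1.
  ring.
apply: abel.
- rewrite /D; apply/eqP; rewrite subr_eq0; apply/eqP; apply: G0 => //; exact: le_trans h1 h2.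
- rewrite /D !GM; exact: subrr.
- by move=> j; rewrite /D subr_ge0; apply: G_mono.
- move=> j hj; rewrite /hn; apply: hm.
  by rewrite !val_insubd hj (ltnW hj) leqnSn.
Qed.

Hypothesis htau : 0 < tau P.

Lemma eps_mono (a b : 'I_M) : (a <= b)%N -> eps P a <= eps P b.
Proof.
move=> hab; rewrite /eps; apply: ler_wpM2r.
  by rewrite invr_ge0 mulr_ge0 ?ler0n.
apply: ler_wpM2r; first exact: ltW.
by rewrite ler_nat; lia.
Qed.

Lemma eps_ge0 (a : 'I_M) : 0 <= eps P a.
Proof.
by rewrite /eps mulr_ge0 ?invr_ge0 ?mulr_ge0 ?ler0n ?(ltW hB).
Qed.

Lemma eps_le (a b : 'I_M) : eps P a <= eps P b -> (a <= b)%N.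
Proof.
move=> h; rewrite leqNgt; apply/negP => hba.
have : eps P b < eps P a.
  rewrite /eps ltr_pM2r ?invr_gt0 ?mulr_gt0 ?ltr0n //.
  by rewrite ltr_pM2r // ltr_nat; lia.
by rewrite ltNge h.
Qed.

Lemma sum_state (F : state M K -> R) : \sum_(s : state M K) F s =
  \sum_(j : 'I_M) \sum_(g : 'I_K) \sum_(h : 'I_K) F (j, g, h).
Proof.
transitivity (\sum_(p : 'I_M * 'I_K) \sum_(h : 'I_K) F (p, h)).
  rewrite pair_big /=.
  by apply: (@eq_bigr _ _ _ ('I_M * 'I_K * 'I_K)%type) => -[p h].
by rewrite [RHS]pair_big /=; apply: eq_bigr => -[j g] _.
Qed.

Lemma qsum (V : state M K -> R) s a :
  \sum_(s' : state M K) ptrans P s a s' * V s' =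
  (1 / K%:R * (1 / K%:R)) * \sum_(j : 'I_M)
     prob_Q P (st_eps P s - (a : nat)%:R * pinvH P s * tau P) (eps P j) *
     (\sum_(g : 'I_K) \sum_(h : 'I_K) V (j, g, h)).
Proof.
rewrite sum_state mulr_sumr; apply: eq_big => // j _.
rewrite !mulr_sumr; apply: eq_big => // g _.
rewrite !mulr_sumr; apply: eq_big => // h _.
rewrite /ptrans /st_eps /=; ring.
Qed.

Lemma qsumq (V : state M K -> R) s a : qval P V s a = cost P s a +
  (1 / K%:R * (1 / K%:R)) * \sum_(j : 'I_M)
     prob_Q P (st_eps P s - (a : nat)%:R * pinvH P s * tau P) (eps P j) *
     (\sum_(g : 'I_K) \sum_(h : 'I_K) V (j, g, h)).
Proof. by rewrite /qval qsum. Qed.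

Lemma auxq2 (q2 q1 c1 c2 k T1 T2 : R) : q2 = c2 + k * T2 -> q1 = c1 + k * T1 -> c2 = c1 ->
  0 <= k -> T2 <= T1 -> q2 <= q1.
Proof. by move=> -> -> -> k0 hT; rewrite lerD2l ler_wpM2l. Qed.

Lemma auxq (c1 c2 S1 S2 k T1 T2 : R) : c2 = c1 -> S2 = k * T2 -> S1 = k * T1 ->
  0 <= k -> T2 <= T1 -> c2 + S2 <= c1 + S1.
Proof. by move=> -> -> -> k0 hT; rewrite lerD2l ler_wpM2l. Qed.

Lemma minA_mono (F1 F2 : bool -> R) s1 s2 :
  (allow1 P s1 -> allow1 P s2) -> F2 false <= F1 false ->
  (allow1 P s1 -> F2 true <= F1 true) -> Defs.minA P F2 s2 <= Defs.minA P F1 s1.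
Proof.
move=> A Hf Ht; rewrite /Defs.minA.
case e1: (allow1 P s1); case e2: (allow1 P s2).
- by rewrite le_min !ge_min Hf (Ht e1) orbT.
- by move: (A e1); rewrite e2.
- by rewrite ge_min Hf.
- exact: Hf.
Qed.

Lemma allow1_mono (g h : 'I_K) (j1 j2 : 'I_M) : eps P j1 <= eps P j2 ->
  allow1 P (j1, g, h) -> allow1 P (j2, g, h).
Proof.
rewrite /allow1 /st_eps /= => He /le_trans; apply.
rewrite le_min; apply/andP; split; rewrite ge_min; apply/orP; [left|right] => //.
by rewrite ler_pM2r ?invr_gt0.
Qed.

Lemma Vk_mono k (g h : 'I_K) (j1 j2 : 'I_M) : eps P j1 <= eps P j2 ->
  Vk P k (j2, g, h) <= Vk P k (j1, g, h).
Proof.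
elim: k g h j1 j2 => [|k IH] g h j1 j2 He /=.
  apply: minA_mono => //; first exact: allow1_mono.
have hV : forall j j' : 'I_M, (j <= j')%N ->
   \sum_(g0 : 'I_K) \sum_(h0 : 'I_K) Vk P k (j', g0, h0) <=
   \sum_(g0 : 'I_K) \sum_(h0 : 'I_K) Vk P k (j, g0, h0).
  move=> j j' hjj; apply: ler_sum => g0 _; apply: ler_sum => h0 _.
  by apply: IH; apply: eps_mono.
have c0 : 0 <= 1 / K%:R * (1 / K%:R) :> R by rewrite mulr_ge0 ?divr_ge0 ?ler0n.
apply: minA_mono.
- exact: allow1_mono.
- have ec : cost P (j2, g, h) false = cost P (j1, g, h) false by [].
  apply: (auxq2 _ _ _ _ _ _ _ (qsumq (Vk P k) (j2, g, h) false) (qsumq (Vk P k) (j1, g, h) false) ec c0).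
  have z : (((false : nat)%:R) : R) = 0 by [].
  rewrite z !mul0r !subr0.
  apply: KL => //; first exact: eps_ge0.
- move=> hA.
  have ec : cost P (j2, g, h) true = cost P (j1, g, h) true by [].
  apply: (auxq2 _ _ _ _ _ _ _ (qsumq (Vk P k) (j2, g, h) true) (qsumq (Vk P k) (j1, g, h) true) ec c0).
  have z : (((true : nat)%:R) : R) = 1 by [].
  rewrite z !mul1r.
  have pe : pinvH P (j2, g, h) = pinvH P (j1, g, h) by [].
  rewrite pe.
  apply: KL => //.
  + move: hA; rewrite /allow1 /st_eps /= subr_ge0 le_min => /andP[+ _].
    by rewrite ler_pdivlMr.
  + by rewrite /st_eps /= lerD2r.
Qed.

End S.

Theorem lemma3 (R : realType) (M K N : nat) (P : mdp R M K) :
  (0 < M)%N -> (0 < K)%N -> (0 < N)%N ->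
  0 < tau P -> 0 < Bm P ->
  (forall k : 'I_K, 0 < Hl P k) ->
  (forall k l : 'I_K, (k < l)%N -> Hl P k < Hl P l) ->
  0 < Rr P -> 0 < W P -> 0 < sigma2 P -> 0 < g0 P -> 0 < theta P ->
  0 < dG P -> 0 < dH P -> 0 < pGmax P -> 0 < pHmax P ->
  0 < wG P -> 0 < wD P ->
  0 < Em P ->
  measurable_fun (suppE P) (fEH P) ->
  (forall t, 0 <= fEH P t) ->
  (\int[@lebesgue_measure R]_(t in suppE P) (fEH P t)%:E)%E = 1%E ->
  forall i : nat, (1 <= i <= N)%N ->
  forall j1 j2 : 'I_M, eps P j1 <= eps P j2 ->
    uhat P N i j2 <= uhat P N i j1.
Proof.
move=> hM hK hN htau hB _ _ _ _ _ _ _ _ _ _ _ _ _ _ mf f0 f1 i hi j1 j2 he.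
rewrite /uhat; apply: ler_sum => g _; apply: ler_sum => h _.
rewrite /ustar.
by apply: Vk_mono.
Qed.
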